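(* The dual norm of the dual space $\mathcal R^*$ of Read's space $\mathcal R=(c_0,|||\cdot|||)$ is $2/3$-rough, i.e. for every $x^*\in\mathcal R^*$, $$\limsup_{|||h|||\to 0}\frac{|||x^*+h|||+|||x^*-h|||-2|||x^*|||}{|||h|||}\ge \frac23,$$ where $|||\cdot|||$ on $\mathcal R^*$ denotes the dual norm. In particular, the norm of $\mathcal R^*$ is not Fréchet differentiable at any point.
   Context: Let $c_{00}(\mathbb Q)$ be the set of finitely supported sequences with rational coefficients, and let $(u_n)_{n\in\mathbb N}$ be a sequence in $c_{00}(\mathbb Q)$ which lists every element of $c_{00}(\mathbb Q)$ infinitely many times. Let $(a_n)_{n\in\mathbb N}$ be a strictly increasing sequence of positive integers with $a_n>\max\operatorname{supp} u_n$ and $a_n>\|u_n\|_1$ for every $n$. $(e_n)$ denotes the canonical unit vectors and $\langle x,y\rangle=\sum_n x_ny_n$. Read's norm on $c_0$ is $|||x||| = \|x\|_\infty + \sum_{n} 2^{-a_n^2}|\langle x, u_n - e_{a_n}\rangle|$, and Read's space is $\mathcal R=(c_0,|||\cdot|||)$ (real scalars). A norm on a Banach space $Z$ is $\varepsilon$-rough ($\varepsilon>0$) if $\limsup_{\|h\|\to0}\frac{\|z+h\|+\|z-h\|-2\|z\|}{\|h\|}\ge\varepsilon$ for every $z\in Z$. *)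

(* Defs.v *)
From Stdlib Require Import Reals QArith.
From Coquelicot Require Import Coquelicot.
Open Scope R_scope.

Definition is_c0 (x : nat -> R) : Prop := is_lim_seq x 0.

Definition is_rat (r : R) : Prop := exists q : Q, r = Q2R q.

Definition fin_supp (v : nat -> R) : Prop :=
  exists N : nat, forall k, (N <= k)%nat -> v k = 0.

Definition in_c00Q (v : nat -> R) : Prop := (forall k, is_rat (v k)) /\ fin_supp v.

Definition sup_norm (x : nat -> R) : R :=
  real (Lub_Rbar (fun r => exists k, r = Rabs (x k))).

(* <x, u_n - e_{a_n}>; since supp u_n ⊆ [0, a_n), the pairing <x,u_n> is the
   finite sum over k = 0..a_n *)
Definition read_pair (u : nat -> nat -> R) (a : nat -> nat) (x : nat -> R) (n : nat) : R :=
  sum_n (fun k => x k * u n k) (a n) - x (a n).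

Definition read_norm (u : nat -> nat -> R) (a : nat -> nat) (x : nat -> R) : R :=
  sup_norm x + Series (fun n => / 2 ^ (a n * a n) * Rabs (read_pair u a x n)).

Record ReadData (u : nat -> nat -> R) (a : nat -> nat) : Prop := {
  rd_u_c00 : forall n, in_c00Q (u n);
  rd_u_lists : forall v, in_c00Q v -> forall N : nat,
      exists n, (N <= n)%nat /\ forall k, u n k = v k;
  rd_a_pos : (0 < a 0)%nat;
  rd_a_incr : forall n, (a n < a (S n))%nat;
  rd_a_supp : forall n k, u n k <> 0 -> (k < a n)%nat;
  rd_a_l1 : forall n, sum_n (fun k => Rabs (u n k)) (a n) < INR (a n)
}.

(* Elements of R^*: linear functionals on c_0 bounded w.r.t. Read's norm
   (values outside c_0 are irrelevant). *)
Definition is_read_dual (u : nat -> nat -> R) (a : nat -> nat) (f : (nat -> R) -> R) : Prop :=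
  (forall x y, is_c0 x -> is_c0 y -> f (fun k => x k + y k) = f x + f y) /\
  (forall c x, is_c0 x -> f (fun k => c * x k) = c * f x) /\
  (exists C, forall x, is_c0 x -> Rabs (f x) <= C * read_norm u a x).

Definition read_dual_norm (u : nat -> nat -> R) (a : nat -> nat) (f : (nat -> R) -> R) : R :=
  real (Lub_Rbar (fun r => exists x, is_c0 x /\ read_norm u a x <= 1 /\ r = Rabs (f x))).

(* eps-roughness of the dual norm at f:
   limsup_{|||h|||->0} (|||f+h|||+|||f-h|||-2|||f|||)/|||h||| >= eps, unfolded. *)
Definition read_dual_rough_at (u : nat -> nat -> R) (a : nat -> nat) (eps : R)
    (f : (nat -> R) -> R) : Prop :=
  forall eta delta : R, 0 < eta -> 0 < delta ->
    exists h : (nat -> R) -> R, is_read_dual u a h /\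
      0 < read_dual_norm u a h < delta /\
      (read_dual_norm u a (fun x => f x + h x) + read_dual_norm u a (fun x => f x - h x)
        - 2 * read_dual_norm u a f) / read_dual_norm u a h >= eps - eta.

(* Main.v *)
Require Import Defs.
From Stdlib Require Import Reals QArith Lra Lia Psatz Classical FunctionalExtensionality.
From Coquelicot Require Import Coquelicot.
Open Scope R_scope.

Lemma lub_props (E : R -> Prop) (B r0 : R) :
  E r0 -> (forall r, E r -> r <= B) ->
  (forall r, E r -> r <= real (Lub_Rbar E)) /\ real (Lub_Rbar E) <= B /\
  (forall eps, 0 < eps -> exists r, E r /\ real (Lub_Rbar E) - eps < r).
Proof.
  intros H0 HB.
  destruct (Lub_Rbar_correct E) as [Hub Hl].
  destruct (Lub_Rbar E) as [l| |] eqn:HL; simpl.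
  - split; [|split].
    + intros r Er. exact (Hub r Er).
    + exact (Hl (Finite B) HB).
    + intros eps Heps. apply NNPP; intro Hn.
      assert (Hu : is_ub_Rbar E (Finite (l - eps))).
      { intros r Er. simpl. apply Rnot_lt_le. intro Hlt. apply Hn. exists r. split; auto. }
      specialize (Hl _ Hu). simpl in Hl. lra.
  - exfalso. exact (Hl (Finite B) HB).
  - exfalso. exact (Hub r0 H0).
Qed.

Lemma c0_bounded (x : nat -> R) : is_c0 x -> exists B, forall k, Rabs (x k) <= B.
Proof.
  intro H. apply is_lim_seq_spec in H.
  destruct (H (mkposreal 1 Rlt_0_1)) as [N HN]. simpl in HN.
  exists (1 + sum_f_R0 (fun j => Rabs (x j)) N).
  assert (Hs : forall n k, (k <= n)%nat -> Rabs (x k) <= sum_f_R0 (fun j => Rabs (x j)) n).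
  { induction n; intros k Hk.
    - assert (k = 0%nat) by lia. subst. simpl. lra.
    - simpl. destruct (Nat.eq_dec k (S n)).
      + subst. assert (0 <= sum_f_R0 (fun j => Rabs (x j)) n).
        { apply cond_pos_sum. intro; apply Rabs_pos. } lra.
      + assert (k <= n)%nat by lia. specialize (IHn k H0). pose proof (Rabs_pos (x (S n))). lra. }
  intro k. destruct (Compare_dec.le_lt_dec N k).
  - specialize (HN k l). rewrite Rminus_0_r in HN.
    assert (0 <= sum_f_R0 (fun j => Rabs (x j)) N).
    { apply cond_pos_sum. intro; apply Rabs_pos. } lra.
  - specialize (Hs N k ltac:(lia)). lra.
Qed.

Lemma sup_norm_ge (x : nat -> R) : is_c0 x -> forall k, Rabs (x k) <= sup_norm x.
Proof.
  intros H k. destruct (c0_bounded x H) as [B HB].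
  destruct (lub_props (fun r => exists k, r = Rabs (x k)) B (Rabs (x k))) as [H1 _].
  - exists k; auto.
  - intros r [j ->]. auto.
  - apply H1. exists k; auto.
Qed.

Lemma sup_norm_le (x : nat -> R) (B : R) : (forall k, Rabs (x k) <= B) -> sup_norm x <= B.
Proof.
  intros HB.
  destruct (lub_props (fun r => exists k, r = Rabs (x k)) B (Rabs (x 0%nat))) as [_ [H2 _]].
  - exists 0%nat; auto.
  - intros r [j ->]. auto.
  - exact H2.
Qed.

Lemma sup_norm_nonneg (x : nat -> R) : is_c0 x -> 0 <= sup_norm x.
Proof. intro H. pose proof (sup_norm_ge x H 0%nat). pose proof (Rabs_pos (x 0%nat)). lra. Qed.
Section S.
Variables (u : nat -> nat -> R) (a : nat -> nat) (HR : ReadData u a).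

Lemma a_ge n : (S n <= a n)%nat.
Proof.
  induction n.
  - exact (rd_a_pos _ _ HR).
  - pose proof (rd_a_incr _ _ HR n). lia.
Qed.

Lemma a_mono n M : (n <= M)%nat -> (a n <= a M)%nat.
Proof.
  induction 1. lia. pose proof (rd_a_incr _ _ HR m). lia.
Qed.

Lemma nat_pow_bound (b : nat) : (b + 1 <= 2 ^ b)%nat.
Proof.
  induction b. simpl; lia. rewrite Nat.pow_succ_r'. pose proof (Nat.pow_le_mono_r 2 0 b ltac:(lia) ltac:(lia)). simpl in H. lia.
Qed.

Lemma weight_bound n : / 2 ^ (a n * a n) * (INR (a n) + 1) <= (/4) ^ n.
Proof.
  pose proof (a_ge n) as Ha. set (b := a n) in *.
  assert (Hn : ((b + 1) * 4 ^ n <= 2 ^ (b * b))%nat).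
  { assert (H1 : (2 * n + b <= b * b)%nat).
    { assert (Hq : (b * S n <= b * b)%nat) by (apply Nat.mul_le_mono_l; lia).
      destruct n. lia. assert (Hr : (2 * S n <= b * S n)%nat) by (apply Nat.mul_le_mono_r; lia). lia. }
    pose proof (Nat.pow_le_mono_r 2 _ _ ltac:(lia) H1) as H2.
    rewrite Nat.pow_add_r, Nat.pow_mul_r in H2. simpl (2^2)%nat in H2.
    pose proof (nat_pow_bound b). nia. }
  apply le_INR in Hn. rewrite mult_INR, !pow_INR, plus_INR in Hn. simpl (INR 4) in Hn. simpl (INR 2) in Hn.
  simpl (INR 1) in Hn.
  replace (1+1+1+1) with 4 in Hn by lra. replace (1+1) with 2 in Hn by lra.
  rewrite pow_inv.
  assert (P1 : 0 < 2 ^ (b*b)) by (apply pow_lt; lra).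
  assert (P2 : 0 < 4 ^ n) by (apply pow_lt; lra).
  apply (Rmult_le_reg_r (2 ^ (b*b) * 4 ^ n)). nra.
  replace (/ 2 ^ (b * b) * (INR b + 1) * (2 ^ (b * b) * 4 ^ n)) with ((INR b + 1) * 4^n) by (field; lra).
  replace (/ 4 ^ n * (2 ^ (b * b) * 4 ^ n)) with (2 ^ (b*b)) by (field; lra).
  lra.
Qed.


Definition term (x : nat -> R) (n : nat) := / 2 ^ (a n * a n) * Rabs (read_pair u a x n).

Lemma pair_bound x n : is_c0 x -> Rabs (read_pair u a x n) <= sup_norm x * (INR (a n) + 1).
Proof.
  intro Hx. unfold read_pair. rewrite sum_n_Reals.
  pose proof (sup_norm_ge x Hx) as Hm. set (m := sup_norm x) in *.
  pose proof (rd_a_l1 _ _ HR n) as Hl1. rewrite sum_n_Reals in Hl1.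
  assert (H1 : Rabs (sum_f_R0 (fun k => x k * u n k) (a n)) <= m * INR (a n)).
  { eapply Rle_trans. apply sum_f_R0_triangle.
    eapply Rle_trans. apply sum_Rle with (Bn := fun k => Rabs (u n k) * m).
    { intros k _. rewrite Rabs_mult. pose proof (Rabs_pos (u n k)). specialize (Hm k). nra. }
    rewrite <- scal_sum. pose proof (sup_norm_nonneg x Hx). fold m in H. nra. }
  eapply Rle_trans. apply Rabs_triang. rewrite Rabs_Ropp. specialize (Hm (a n)). lra.
Qed.

Lemma term_nonneg x n : 0 <= term x n.
Proof.
  unfold term. apply Rmult_le_pos. left; apply Rinv_0_lt_compat, pow_lt; lra. apply Rabs_pos.
Qed.

Lemma term_bound x n : is_c0 x -> term x n <= sup_norm x * (/4) ^ n.
Proof.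
  intro Hx. unfold term. pose proof (pair_bound x n Hx). pose proof (weight_bound n).
  assert (0 < / 2 ^ (a n * a n)) by (apply Rinv_0_lt_compat, pow_lt; lra).
  pose proof (sup_norm_nonneg x Hx).
  apply Rle_trans with (/ 2 ^ (a n * a n) * (sup_norm x * (INR (a n) + 1))).
  apply Rmult_le_compat_l; lra.
  replace (/ 2 ^ (a n * a n) * (sup_norm x * (INR (a n) + 1))) with
    (sup_norm x * (/ 2 ^ (a n * a n) * (INR (a n) + 1))) by ring.
  apply Rmult_le_compat_l; lra.
Qed.

Lemma ex_series_geom_scal (c q : R) : Rabs q < 1 -> ex_series (fun n => c * q ^ n).
Proof.
  intro Hq. apply (ex_series_scal_l c (fun n => q ^ n)). now apply ex_series_geom.
Qed.

Lemma Series_geom_scal (c q : R) : Rabs q < 1 -> Series (fun n => c * q ^ n) = c / (1 - q).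
Proof. intro Hq. rewrite Series_scal_l, Series_geom; auto. Qed.

Lemma ex_series_term x : is_c0 x -> ex_series (term x).
Proof.
  intro Hx. apply (ex_series_le (term x) (fun n => sup_norm x * (/4)^n)).
  - intro n. unfold norm; simpl. unfold abs; simpl. rewrite Rabs_pos_eq by apply term_nonneg.
    now apply term_bound.
  - apply ex_series_geom_scal. rewrite Rabs_pos_eq; lra.
Qed.

Lemma Series_term_bound x : is_c0 x -> 0 <= Series (term x) <= sup_norm x * (4/3).
Proof.
  intro Hx. split.
  - replace 0 with (Series (fun n => 0 * (/4)^n)).
    apply Series_le. intro n. split. lra. rewrite Rmult_0_l; apply term_nonneg.
    apply ex_series_term; auto.
    rewrite Series_scal_l; ring.
  - replace (sup_norm x * (4/3)) with (Series (fun n => sup_norm x * (/4)^n)).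
    apply Series_le. intro n. split. apply term_nonneg. now apply term_bound.
    apply ex_series_geom_scal. rewrite Rabs_pos_eq; lra.
    rewrite Series_geom_scal. field. rewrite Rabs_pos_eq; lra.
Qed.

Lemma read_norm_bounds x : is_c0 x ->
  read_norm u a x = sup_norm x + Series (term x) /\
  sup_norm x <= read_norm u a x <= sup_norm x * (7/3).
Proof.
  intro Hx. pose proof (Series_term_bound x Hx). unfold read_norm. fold (term x). split; [reflexivity|]. lra.
Qed.


Lemma pair_scale c x n : read_pair u a (fun k => c * x k) n = c * read_pair u a x n.
Proof.
  unfold read_pair. rewrite !sum_n_Reals. rewrite Rmult_minus_distr_l, scal_sum.
  f_equal. apply sum_eq. intros; ring.
Qed.

Lemma term_scale c x n : term (fun k => c * x k) n = Rabs c * term x n.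
Proof. unfold term. rewrite pair_scale, Rabs_mult. ring. Qed.

Lemma c0_scale c x : is_c0 x -> is_c0 (fun k => c * x k).
Proof.
  intro H. unfold is_c0 in *. pose proof (is_lim_seq_scal_l x c 0 H) as H1.
  simpl in H1. rewrite Rmult_0_r in H1. exact H1.
Qed.

Lemma read_norm_scale c x : is_c0 x -> read_norm u a (fun k => c * x k) <= Rabs c * read_norm u a x.
Proof.
  intro Hx. pose proof (c0_scale c x Hx) as Hcx.
  destruct (read_norm_bounds _ Hcx) as [E1 _]. destruct (read_norm_bounds _ Hx) as [E2 _].
  rewrite E1, E2.
  assert (sup_norm (fun k => c * x k) <= Rabs c * sup_norm x).
  { apply sup_norm_le. intro k. rewrite Rabs_mult. apply Rmult_le_compat_l. apply Rabs_pos. now apply sup_norm_ge. }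
  rewrite (Series_ext _ (fun n => Rabs c * term x n)) by (intro; apply term_scale).
  rewrite Series_scal_l. lra.
Qed.

Lemma inv2_pow_le M n : (M <= n)%nat -> (/2) ^ n <= (/2) ^ M.
Proof.
  intro H. rewrite !pow_inv. apply Rinv_le_contravar. apply pow_lt; lra. apply Rle_pow; auto; lra.
Qed.

Lemma perturb x d k M : is_c0 x -> (forall j, j <> k -> d j = 0) -> (a M < k)%nat ->
  Rabs (x k + d k) <= sup_norm x ->
  is_c0 (fun j => x j + d j) /\
  read_norm u a (fun j => x j + d j) <= read_norm u a x + Rabs (d k) * (2 * (/2) ^ M).
Proof.
  intros Hx Hd HM Hk. set (y := fun j => x j + d j).
  assert (Hy : is_c0 y).
  { unfold is_c0. apply is_lim_seq_ext_loc with x; auto.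
    exists (S k). intros n Hn. unfold y. rewrite Hd by lia. ring. }
  split; [exact Hy|].
  destruct (read_norm_bounds _ Hy) as [E1 _]. destruct (read_norm_bounds _ Hx) as [E2 _].
  rewrite E1, E2.
  assert (Hs : sup_norm y <= sup_norm x).
  { apply sup_norm_le. intro j. unfold y. destruct (Nat.eq_dec j k). subst; auto.
    rewrite Hd by auto. rewrite Rplus_0_r. now apply sup_norm_ge. }
  assert (Hdk : forall j, Rabs (d j) <= Rabs (d k)).
  { intro j. destruct (Nat.eq_dec j k). subst; lra. rewrite Hd by auto. rewrite Rabs_R0. apply Rabs_pos. }
  assert (Ht : forall n, 0 <= term y n <= term x n + Rabs (d k) * (/2) ^ M * (/2) ^ n).
  { intro n. split. apply term_nonneg.
    assert (P0 : 0 <= Rabs (d k) * (/2) ^ M * (/2) ^ n).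
    { apply Rmult_le_pos. apply Rmult_le_pos. apply Rabs_pos. apply pow_le; lra. apply pow_le; lra. }
    destruct (Compare_dec.le_lt_dec k (a n)) as [Hl|Hl].
    - assert (HnM : (M <= n)%nat).
      { destruct (Compare_dec.le_lt_dec M n). auto. pose proof (a_mono n M ltac:(lia)). lia. }
      assert (Hp : Rabs (read_pair u a y n) <= Rabs (read_pair u a x n) + Rabs (d k) * (INR (a n) + 1)).
      { assert (Eq : read_pair u a y n = read_pair u a x n + (sum_f_R0 (fun j => d j * u n j) (a n) - d (a n))).
        { unfold read_pair. rewrite !sum_n_Reals. unfold y.
          assert (sum_f_R0 (fun k0 : nat => (x k0 + d k0) * u n k0) (a n) =
                  sum_f_R0 (fun k0 => x k0 * u n k0) (a n) + sum_f_R0 (fun j => d j * u n j) (a n)).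
          { rewrite <- sum_plus. apply sum_eq. intros; ring. }
          rewrite H. ring. }
        rewrite Eq. eapply Rle_trans. apply Rabs_triang. apply Rplus_le_compat_l.
        pose proof (rd_a_l1 _ _ HR n) as Hl1. rewrite sum_n_Reals in Hl1.
        assert (H1 : Rabs (sum_f_R0 (fun j => d j * u n j) (a n)) <= Rabs (d k) * INR (a n)).
        { eapply Rle_trans. apply sum_f_R0_triangle.
          eapply Rle_trans. apply sum_Rle with (Bn := fun j => Rabs (u n j) * Rabs (d k)).
          { intros j _. rewrite Rabs_mult. pose proof (Rabs_pos (u n j)). specialize (Hdk j). nra. }
          rewrite <- scal_sum. pose proof (Rabs_pos (d k)). nra. }
        eapply Rle_trans. apply Rabs_triang. rewrite Rabs_Ropp. specialize (Hdk (a n)). lra. }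
      unfold term. pose proof (weight_bound n) as W.
      assert (Wp : 0 < / 2 ^ (a n * a n)) by (apply Rinv_0_lt_compat, pow_lt; lra).
      assert (Q : (/4) ^ n <= (/2) ^ M * (/2) ^ n).
      { replace (/4) with (/2 * /2) by field. rewrite Rpow_mult_distr.
        apply Rmult_le_compat_r. apply pow_le; lra. now apply inv2_pow_le. }
      pose proof (Rabs_pos (d k)).
      apply Rle_trans with (/ 2 ^ (a n * a n) * Rabs (read_pair u a x n) + Rabs (d k) * (/ 2 ^ (a n * a n) * (INR (a n) + 1))).
      nra. nra.
    - assert (Eq : read_pair u a y n = read_pair u a x n).
      { unfold read_pair.
        assert (E3 : y (a n) = x (a n)) by (unfold y; rewrite Hd by lia; ring).
        rewrite E3. f_equal. apply sum_n_ext_loc. intros j Hj. unfold y. rewrite Hd by lia. rewrite Rplus_0_r. reflexivity. }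
      unfold term. rewrite Eq. lra. }
  assert (Hser : Series (term y) <= Series (term x) + Rabs (d k) * (/2) ^ M * 2).
  { eapply Rle_trans. apply Series_le with (b := fun n => term x n + Rabs (d k) * (/2) ^ M * (/2) ^ n).
    exact Ht. apply (ex_series_plus (term x)). now apply ex_series_term. apply ex_series_geom_scal. rewrite Rabs_pos_eq; lra.
    rewrite Series_plus. rewrite Series_geom_scal. apply Req_le. field.
    rewrite Rabs_pos_eq; lra. now apply ex_series_term. apply ex_series_geom_scal. rewrite Rabs_pos_eq; lra. }
  lra.
Qed.


Definition Eset (g : (nat -> R) -> R) :=
  fun r => exists x, is_c0 x /\ read_norm u a x <= 1 /\ r = Rabs (g x).

Lemma dn_all g B z : (forall w, is_c0 w -> read_norm u a w <= 1 -> Rabs (g w) <= B) ->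
  is_c0 z -> read_norm u a z <= 1 ->
  (forall w, is_c0 w -> read_norm u a w <= 1 -> Rabs (g w) <= read_dual_norm u a g) /\
  read_dual_norm u a g <= B /\
  (forall eps, 0 < eps -> exists w, is_c0 w /\ read_norm u a w <= 1 /\ read_dual_norm u a g - eps < Rabs (g w)).
Proof.
  intros HB Hz Hzn.
  destruct (lub_props (Eset g) B (Rabs (g z))) as [H1 [H2 H3]].
  - exists z; auto.
  - intros r [w [Hw [Hwn ->]]]. auto.
  - unfold read_dual_norm. fold (Eset g). split; [|split]; auto.
    + intros w Hw Hwn. apply H1. exists w; auto.
    + intros eps Heps. destruct (H3 eps Heps) as [r [[w [Hw [Hwn ->]]] Hr]]. exists w; auto.
Qed.

Lemma rn_nonneg x : is_c0 x -> 0 <= read_norm u a x.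
Proof. intro H. destruct (read_norm_bounds x H) as [_ [H1 _]]. pose proof (sup_norm_nonneg x H). lra. Qed.

Lemma c0_finite (d : nat -> R) k : (forall j, j <> k -> d j = 0) -> is_c0 d.
Proof.
  intro H. unfold is_c0. apply is_lim_seq_ext_loc with (fun _ => 0). exists (S k). intros n Hn. rewrite H by lia. auto.
  apply is_lim_seq_const.
Qed.

End S.
Lemma arith (t e Nf fx s m c T lam : R) :
  0 < t <= 1 -> 0 < e <= 1/2 -> 0 <= Nf -> 0 <= fx -> Nf - t*e/8 <= fx ->
  0 < s <= 1 -> s <= m * (7/3) -> m <= s -> 0 < c <= m -> m * (1 - e/8) <= c ->
  0 < T -> T * (Nf + 1) * 8 <= t * e -> lam * (s + c * T) = 1 ->
  t * (2/3 - e) <= 2 * lam * fx + 2 * t * lam * c - 2 * Nf.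
Proof.
  intros Ht He HN Hfx Hfx2 Hs Hsm Hms Hc Hc2 HT HT2 Hl.
  assert (HTe : T <= e/8).
  { assert (T * 8 <= T * (Nf+1) * 8) by nra. assert (t * e <= e) by nra. lra. }
  assert (Hpos : 0 < s + c*T) by nra.
  assert (Hlam : 0 < lam).
  { destruct (Rle_or_lt lam 0) as [H|H]; [|exact H]. assert (lam * (s + c*T) <= 0) by nra. lra. }
  assert (HcT : c * T <= T) by nra.
  assert (L1 : 1 - c*T <= lam).
  { assert (lam * (1 + c*T) >= 1) by nra. nra. }
  assert (F1 : lam * fx >= Nf - t*e/4).
  { assert (lam * fx >= (1 - c*T) * fx) by nra.
    assert ((1 - c*T) * fx >= (1 - c*T) * (Nf - t*e/8)) by nra.
    assert (Nf * (c*T) <= Nf * T) by nra.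
    assert (Nf * T <= t*e/8) by nra.
    nra. }
  assert (F2 : lam * c >= (1/3) * (1 - e/4)).
  {
    assert (E : lam * c * (s + c*T) = c) by nra.
    assert (s + c*T <= s * (1 + T)) by nra.
    assert (lam * c * (s * (1+T)) >= c) by nra.
    assert (c >= s * (3/7) * (1 - e/8)) by nra.
    assert (lam * c * (1 + T) >= (3/7) * (1 - e/8)) by nra.
    nra. }
  nra.
Qed.

Theorem theorem2p6 (u : nat -> nat -> R) (a : nat -> nat) (HR : ReadData u a) :
  forall f : (nat -> R) -> R, is_read_dual u a f -> read_dual_rough_at u a (2 / 3) f.
Proof.
  intros f [Hadd [Hhom [C HC]]] eta delta Heta Hdelta.
  set (e := Rmin eta (1/2)).
  assert (He : 0 < e <= 1/2 /\ e <= eta).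
  { unfold e. split; [split|]. apply Rmin_glb_lt; lra. apply Rmin_r. apply Rmin_l. }
  set (t := Rmin (delta/2) 1).
  assert (Ht : 0 < t <= 1 /\ t < delta).
  { unfold t. split; [split|]. apply Rmin_glb_lt; lra. apply Rmin_r. pose proof (Rmin_l (delta/2) 1). lra. }
  set (z0 := fun _ : nat => 0).
  assert (Hz0 : is_c0 z0) by (apply is_lim_seq_const).
  assert (Hz0n : read_norm u a z0 <= 1).
  { destruct (read_norm_bounds u a HR z0 Hz0) as [_ [_ H]].
    assert (sup_norm z0 <= 0) by (apply sup_norm_le; intro; unfold z0; rewrite Rabs_R0; lra). lra. }
  assert (BF : forall w, is_c0 w -> read_norm u a w <= 1 -> Rabs (f w) <= Rabs C).
  { intros w Hw Hwn. pose proof (HC w Hw). pose proof (rn_nonneg u a HR w Hw).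
    pose proof (Rle_abs C). pose proof (Rabs_pos C). nra. }
  destruct (dn_all u a f (Rabs C) z0 BF Hz0 Hz0n) as [Nge [_ Napp]].
  set (Nf := read_dual_norm u a f) in *.
  assert (HNf : 0 <= Nf) by (pose proof (Nge z0 Hz0 Hz0n); pose proof (Rabs_pos (f z0)); lra).
  assert (Sgn : forall w j, is_c0 w -> read_norm u a w <= 1 -> w j <> 0 ->
            exists x, is_c0 x /\ read_norm u a x <= 1 /\ (exists j, x j <> 0) /\ f x = Rabs (f w)).
  { intros w j Hw Hwn Hj. destruct (Rle_or_lt 0 (f w)) as [Hp|Hn].
    - exists w. repeat split; auto. exists j; auto. rewrite Rabs_pos_eq; auto.
    - exists (fun k => -1 * w k). split; [|split; [|split]].
      + now apply c0_scale.
      + eapply Rle_trans. apply read_norm_scale; auto. replace (Rabs (-1)) with 1 by (rewrite Rabs_left; lra). lra.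
      + exists j. intro H. apply Hj. lra.
      + rewrite Hhom by auto. rewrite Rabs_left by auto. ring. }
  assert (Hx : exists x, is_c0 x /\ read_norm u a x <= 1 /\ (exists j, x j <> 0) /\ 0 <= f x /\ Nf - t*e/8 <= f x).
  { assert (Heps : 0 < t*e/8) by nra.
    destruct (Napp _ Heps) as [x0 [Hx0 [Hx0n Hx0f]]].
    destruct (classic (exists j, x0 j <> 0)) as [[j Hj]|Hall].
    - destruct (Sgn x0 j Hx0 Hx0n Hj) as [x [H1 [H2 [H3 H4]]]].
      exists x. repeat split; auto; rewrite H4; [apply Rabs_pos|lra].
    - assert (Ex0 : x0 = fun k => 0 * x0 k).
      { apply functional_extensionality. intro k. destruct (Req_dec (x0 k) 0). rewrite H; ring.
        exfalso; apply Hall; exists k; auto. }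
      assert (Hf0 : f x0 = 0) by (rewrite Ex0, Hhom by auto; ring).
      rewrite Hf0, Rabs_R0 in Hx0f.
      set (e0 := fun j : nat => if Nat.eqb j 0 then /3 else 0).
      assert (He0 : is_c0 e0).
      { apply c0_finite with 0%nat. intros j Hj. unfold e0. apply Nat.eqb_neq in Hj. rewrite Hj. auto. }
      assert (He0n : read_norm u a e0 <= 1).
      { destruct (read_norm_bounds u a HR e0 He0) as [_ [_ H]].
        assert (sup_norm e0 <= /3).
        { apply sup_norm_le; intro j; unfold e0; destruct (Nat.eqb j 0).
          rewrite Rabs_pos_eq; lra. rewrite Rabs_R0; lra. }
        lra. }
      assert (He00 : e0 0%nat <> 0) by (unfold e0; simpl; lra).
      destruct (Sgn e0 0%nat He0 He0n He00) as [x [H1 [H2 [H3 H4]]]].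
      exists x. repeat split; auto; rewrite H4; pose proof (Rabs_pos (f e0)); lra. }
  destruct Hx as [x [Hxc [Hxn [[j Hj] [Hfx1 Hfx2]]]]].
  destruct (read_norm_bounds u a HR x Hxc) as [_ [Hs1 Hs2]].
  set (m := sup_norm x) in *. set (s := read_norm u a x) in *.
  assert (Hm : 0 < m).
  { pose proof (sup_norm_ge x Hxc j). pose proof (Rabs_pos_lt _ Hj). fold m in H. lra. }
  set (yy := t * e / (16 * (Nf + 1))).
  assert (Hyy : 0 < yy) by (unfold yy; apply Rdiv_lt_0_compat; nra).
  destruct (pow_lt_1_zero (/2) ltac:(rewrite Rabs_pos_eq; lra) yy Hyy) as [M HM].
  specialize (HM M (le_n M)). rewrite Rabs_pos_eq in HM by (apply pow_le; lra).
  set (T := 2 * (/2) ^ M).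
  assert (HT : 0 < T) by (unfold T; apply Rmult_lt_0_compat; [lra| apply pow_lt; lra]).
  assert (HT2 : T * (Nf + 1) * 8 <= t * e).
  { unfold T. assert (2 * (/2)^M * (Nf+1) * 8 <= 2 * yy * (Nf+1) * 8) by nra.
    assert (2 * yy * (Nf + 1) * 8 = t * e) by (unfold yy; field; lra). lra. }
  assert (Hme : 0 < m * e / 8) by nra.
  pose proof Hxc as Hxl. unfold is_c0 in Hxl. apply is_lim_seq_spec in Hxl.
  destruct (Hxl (mkposreal _ Hme)) as [K HK]. simpl in HK.
  set (k := Nat.max K (S (a M))).
  assert (Hxk : Rabs (x k) < m * e / 8).
  { specialize (HK k ltac:(unfold k; lia)). rewrite Rminus_0_r in HK. exact HK. }
  assert (HaM : (a M < k)%nat) by (unfold k; lia).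
  set (c := m - Rabs (x k)).
  assert (Hc : 0 < c <= m /\ m * (1 - e/8) <= c).
  { unfold c. pose proof (Rabs_pos (x k)). split; [split|]; nra. }
  set (d1 := fun j => if Nat.eqb j k then c else 0).
  set (d2 := fun j => if Nat.eqb j k then - c else 0).
  assert (Hd1 : forall j, j <> k -> d1 j = 0).
  { intros i Hi. unfold d1. apply Nat.eqb_neq in Hi. rewrite Hi. auto. }
  assert (Hd2 : forall j, j <> k -> d2 j = 0).
  { intros i Hi. unfold d2. apply Nat.eqb_neq in Hi. rewrite Hi. auto. }
  assert (Hd1k : d1 k = c) by (unfold d1; rewrite Nat.eqb_refl; auto).
  assert (Hd2k : d2 k = - c) by (unfold d2; rewrite Nat.eqb_refl; auto).
  assert (Pr1 : Rabs (x k + d1 k) <= sup_norm x).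
  { rewrite Hd1k. fold m. eapply Rle_trans. apply Rabs_triang. rewrite (Rabs_pos_eq c) by lra. unfold c. lra. }
  assert (Pr2 : Rabs (x k + d2 k) <= sup_norm x).
  { rewrite Hd2k. fold m. eapply Rle_trans. apply Rabs_triang. rewrite Rabs_Ropp, (Rabs_pos_eq c) by lra. unfold c. lra. }
  destruct (perturb u a HR x d1 k M Hxc Hd1 HaM Pr1) as [Hy1c Hy1n].
  destruct (perturb u a HR x d2 k M Hxc Hd2 HaM Pr2) as [Hy2c Hy2n].
  rewrite Hd1k, Rabs_pos_eq in Hy1n by lra.
  rewrite Hd2k, Rabs_Ropp, Rabs_pos_eq in Hy2n by lra.
  fold s T in Hy1n, Hy2n.
  set (y1 := fun j => x j + d1 j) in *. set (y2 := fun j => x j + d2 j) in *.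
  assert (Hsp : 0 < s + c * T) by nra.
  set (lam := / (s + c * T)).
  assert (Hlam : 0 < lam) by (apply Rinv_0_lt_compat; lra).
  assert (Hlam1 : lam * (s + c * T) = 1) by (unfold lam; field; lra).
  set (p := fun j => lam * y1 j). set (q := fun j => lam * y2 j).
  assert (Hpc : is_c0 p) by (apply c0_scale; auto).
  assert (Hqc : is_c0 q) by (apply c0_scale; auto).
  assert (Hpn : read_norm u a p <= 1).
  { eapply Rle_trans. apply read_norm_scale; auto. rewrite Rabs_pos_eq by lra. nra. }
  assert (Hqn : read_norm u a q <= 1).
  { eapply Rle_trans. apply read_norm_scale; auto. rewrite Rabs_pos_eq by lra. nra. }
  assert (Hd1c : is_c0 d1) by (apply c0_finite with k; auto).
  assert (Ed2 : d2 = fun j => -1 * d1 j).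
  { apply functional_extensionality. intro i. unfold d1, d2. destruct (Nat.eqb i k); ring. }
  assert (Hfp : f p = lam * (f x + f d1)).
  { unfold p. rewrite Hhom by auto. unfold y1. rewrite Hadd by auto. reflexivity. }
  assert (Hfq : f q = lam * (f x - f d1)).
  { unfold q. rewrite Hhom by auto. unfold y2. rewrite Hadd by (rewrite ?Ed2; auto using c0_scale).
    rewrite Ed2, Hhom by auto. ring. }
  assert (Hpk : p k = lam * (x k + c)) by (unfold p, y1; rewrite Hd1k; auto).
  assert (Hqk : q k = lam * (x k - c)) by (unfold q, y2; rewrite Hd2k; ring).
  assert (Hball : forall w, is_c0 w -> read_norm u a w <= 1 -> Rabs (t * w k) <= t).
  { intros w Hw Hwn. rewrite Rabs_mult, Rabs_pos_eq by lra.
    pose proof (sup_norm_ge w Hw k). destruct (read_norm_bounds u a HR w Hw) as [_ [H1 _]]. nra. }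
  exists (fun z => t * z k).
  split.
  { split; [|split].
    - intros; ring.
    - intros; ring.
    - exists t. intros w Hw. rewrite Rabs_mult, Rabs_pos_eq by lra.
      pose proof (sup_norm_ge w Hw k). destruct (read_norm_bounds u a HR w Hw) as [_ [H1 _]]. nra. }
  destruct (dn_all u a (fun z => t * z k) t p Hball Hpc Hpn) as [Nhge [Nhle _]].
  set (Nh := read_dual_norm u a (fun z => t * z k)) in *.
  assert (HNh : 0 < Nh).
  { pose proof (Nhge p Hpc Hpn). rewrite Hpk in H.
    assert (0 < t * (lam * (x k + c))).
    { apply Rmult_lt_0_compat. lra. apply Rmult_lt_0_compat. lra. unfold c.
      pose proof (Rle_abs (- x k)). rewrite Rabs_Ropp in H0. nra. }
    rewrite Rabs_pos_eq in H; lra. }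
  assert (Bp : forall w, is_c0 w -> read_norm u a w <= 1 -> Rabs (f w + t * w k) <= Rabs C + t).
  { intros w Hw Hwn. eapply Rle_trans. apply Rabs_triang. pose proof (BF w Hw Hwn). pose proof (Hball w Hw Hwn). lra. }
  assert (Bm : forall w, is_c0 w -> read_norm u a w <= 1 -> Rabs (f w - t * w k) <= Rabs C + t).
  { intros w Hw Hwn. eapply Rle_trans. apply Rabs_triang. rewrite Rabs_Ropp. pose proof (BF w Hw Hwn). pose proof (Hball w Hw Hwn). lra. }
  destruct (dn_all u a (fun z => f z + t * z k) _ p Bp Hpc Hpn) as [Npge _].
  destruct (dn_all u a (fun z => f z - t * z k) _ p Bm Hpc Hpn) as [Nmge _].
  pose proof (Npge p Hpc Hpn) as P1. pose proof (Nmge q Hqc Hqn) as P2.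
  cbv beta in P1, P2.
  pose proof (Rle_abs (f p + t * p k)) as A1. pose proof (Rle_abs (f q - t * q k)) as A2.
  set (Np := read_dual_norm u a (fun z => f z + t * z k)) in *.
  set (Nm := read_dual_norm u a (fun z => f z - t * z k)) in *.
  assert (Num : t * (2/3 - e) <= Np + Nm - 2 * Nf).
  { assert (Np + Nm >= 2 * lam * f x + 2 * t * lam * c).
    { assert (B1 : f p + t * p k <= Np) by lra. assert (B2 : f q - t * q k <= Nm) by lra.
      rewrite Hfp, Hpk in B1. rewrite Hfq, Hqk in B2.
      assert (lam * (f x + f d1) + t * (lam * (x k + c)) + (lam * (f x - f d1) - t * (lam * (x k - c)))
              = 2 * lam * f x + 2 * t * lam * c) by ring. lra. }
    pose proof (arith t e Nf (f x) s m c T lam ltac:(lra) ltac:(lra) HNf Hfx1 Hfx2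
       ltac:(split; [nra|lra]) ltac:(lra) ltac:(lra) ltac:(lra) ltac:(lra) HT HT2 Hlam1). lra. }
  split.
  - split; lra.
  - apply Rle_ge. unfold Rdiv. apply (Rmult_le_reg_r Nh); auto.
    rewrite Rmult_assoc, Rinv_l, Rmult_1_r by lra. nra.
Qed.
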